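(* Let $g(t)$, $t\in[0,T)$, be the maximal Ricci flow solution on $S^1\times S^3$ of the form $g(t)=\phi^2dz^2+a^2\omega^1\otimes\omega^1+b^2\omega^2\otimes\omega^2+c^2\omega^3\otimes\omega^3$ starting from initial data with $0<a\le b\le c$, and let $\hat c(t)=\max_s c(s,t)$. Suppose that at time $t=0$ we have $1\le\max_s\left(\frac{c}{a}\right)\le\lambda$ for some constant $\lambda\ge1$. Then for all $(z,t)\in S^1\times[0,T)$, $$1\le\frac{c^2}{a^2}\le e^{(\lambda^2-1)}(\lambda^2-1)\left(1-\frac{4t}{\hat c(0)^2}\right)^2+1.$$
   Context: $S^3=SU(2)$ carries a global left-invariant frame $E_1,E_2,E_3$ with $[E_i,E_j]=-2\epsilon_{ijk}E_k$ and dual coframe $\omega^i$; $z\in S^1=[0,2\pi)$, $\phi,a,b,c$ positive smooth $2\pi$-periodic functions; $s$ is the arclength coordinate $ds=\phi\,dz$. The Ricci flow $\partial_tg=-2\mathrm{Ric}(g)$ preserves this form. *)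

(* Defs.v *)
From Stdlib Require Import Reals.
From Coquelicot Require Import Coquelicot.
Open Scope R_scope.

(* Functions of (z,t) are curried: f z t.  z is the periodic coordinate on
   S^1 = R / 2piZ, t is time. *)

Definition dz (f : R -> R -> R) : R -> R -> R :=
  fun z t => Derive (fun x => f x t) z.
Definition dt (f : R -> R -> R) : R -> R -> R :=
  fun z t => Derive (fun s => f z s) t.

Fixpoint pdz (n : nat) (f : R -> R -> R) : R -> R -> R :=
  match n with O => f | S k => dz (pdz k f) end.
Fixpoint pdt (m : nat) (f : R -> R -> R) : R -> R -> R :=
  match m with O => f | S k => dt (pdt k f) end.
Definition pd (n m : nat) (f : R -> R -> R) : R -> R -> R := pdz n (pdt m f).

Definition uncurry2 (f : R -> R -> R) : R * R -> R := fun p => f (fst p) (snd p).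

Definition smooth_on (T : Rbar) (f : R -> R -> R) : Prop :=
  (forall (n m : nat) (z t : R), 0 < t -> Rbar_lt t T ->
     ex_derive (fun x => pd n m f x t) z /\
     ex_derive (fun s => pd n m f z s) t /\
     continuous (uncurry2 (pd n m f)) (z, t)) /\
  (forall (n : nat) (z t : R), 0 <= t -> Rbar_lt t T ->
     ex_derive (fun x => pdz n f x t) z /\
     filterlim (uncurry2 (pdz n f)) (within (fun p : R * R => 0 <= snd p) (locally (z, t)))
       (locally (pdz n f z t))).

Definition periodic_z (f : R -> R -> R) : Prop :=
  forall z t, f (z + 2 * PI) t = f z t.

(* arclength derivative d/ds = (1/phi) d/dz *)
Definition ds (phi f : R -> R -> R) : R -> R -> R :=
  fun z t => dz f z t / phi z t.
Definition dss (phi f : R -> R -> R) : R -> R -> R := ds phi (ds phi f).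

(* Ricci flow  d/dt g = -2 Ric(g)  for
     g = phi^2 dz^2 + a^2 w1^2 + b^2 w2^2 + c^2 w3^2,
   with [E_i,E_j] = -2 eps_ijk E_k, written out as the equivalent PDE system
   for (phi,a,b,c). *)
Definition RF_eqs (phi a b c : R -> R -> R) (z t : R) : Prop :=
  dt a z t = dss phi a z t
             + ds phi a z t * (ds phi b z t / b z t + ds phi c z t / c z t)
             - 2 * (a z t ^ 4 - (b z t ^ 2 - c z t ^ 2) ^ 2)
                 / (a z t * b z t ^ 2 * c z t ^ 2) /\
  dt b z t = dss phi b z t
             + ds phi b z t * (ds phi a z t / a z t + ds phi c z t / c z t)
             - 2 * (b z t ^ 4 - (a z t ^ 2 - c z t ^ 2) ^ 2)
                 / (b z t * a z t ^ 2 * c z t ^ 2) /\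
  dt c z t = dss phi c z t
             + ds phi c z t * (ds phi a z t / a z t + ds phi b z t / b z t)
             - 2 * (c z t ^ 4 - (a z t ^ 2 - b z t ^ 2) ^ 2)
                 / (c z t * a z t ^ 2 * b z t ^ 2) /\
  dt phi z t = phi z t * (dss phi a z t / a z t + dss phi b z t / b z t
                          + dss phi c z t / c z t).

Definition RF_solution (T : Rbar) (phi a b c : R -> R -> R) : Prop :=
  Rbar_lt 0 T /\
  (forall f, (f = phi \/ f = a \/ f = b \/ f = c) ->
     smooth_on T f /\ periodic_z f /\
     (forall z t, 0 <= t -> Rbar_lt t T -> 0 < f z t)) /\
  (forall z t, 0 < t -> Rbar_lt t T -> RF_eqs phi a b c z t).

Definition RF_maximal (T : Rbar) (phi a b c : R -> R -> R) : Prop :=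
  RF_solution T phi a b c /\
  ~ (exists (T' : Rbar) (phi' a' b' c' : R -> R -> R),
       Rbar_lt T T' /\ RF_solution T' phi' a' b' c' /\
       forall z t, 0 <= t -> Rbar_lt t T ->
         phi' z t = phi z t /\ a' z t = a z t /\ b' z t = b z t /\ c' z t = c z t).

Definition chat (c : R -> R -> R) (t : R) : R :=
  real (Lub_Rbar (fun y => exists z, y = c z t)).

(* Main.v *)
Require Import Defs.
From Stdlib Require Import Reals.
From Coquelicot Require Import Coquelicot.
From Stdlib Require Import Lra Lia ZArith ClassicalEpsilon Classical.
Open Scope R_scope.

Definition W (z t : R) := within (fun p : R * R => 0 <= snd p) (locally (z, t)).
Definition cont (F : R -> R -> R) (z t : R) : Prop :=
  filterlim (uncurry2 F) (W z t) (locally (F z t)).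

Lemma cont_ed F z t : cont F z t ->
  forall eps, 0 < eps -> exists del, 0 < del /\ forall z' t', 0 <= t' ->
    Rabs (z' - z) < del -> Rabs (t' - t) < del -> Rabs (F z' t' - F z t) < eps.
Proof.
  intros H eps Heps.
  specialize (H (ball (F z t) (mkposreal eps Heps))).
  destruct H as [del Hd]. apply locally_ball.
  exists del; split; [apply cond_pos|].
  intros z' t' Ht Hz Htt.
  specialize (Hd (z', t')). simpl in Hd. apply Hd; [split|exact Ht].
  - exact Hz.
  - exact Htt.
Qed.

Lemma cont_plus F G z t : cont F z t -> cont G z t -> cont (fun x s => F x s + G x s) z t.
Proof.
  intros HF HG. unfold cont, uncurry2 in *.
  apply (filterlim_comp_2 _ _ Rplus HF HG). apply (filterlim_plus (F z t) (G z t)).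
Qed.

Lemma cont_mult F G z t : cont F z t -> cont G z t -> cont (fun x s => F x s * G x s) z t.
Proof.
  intros HF HG. unfold cont, uncurry2 in *.
  apply (filterlim_comp_2 _ _ Rmult HF HG). apply (filterlim_mult (F z t) (G z t)).
Qed.

Lemma cont_inv F z t : cont F z t -> F z t <> 0 -> cont (fun x s => / F x s) z t.
Proof.
  intros HF Hn. unfold cont, uncurry2 in *.
  eapply (filterlim_comp _ _ _ _ Rinv); [exact HF|].
  apply (filterlim_Rbar_inv (F z t)). intro E. apply Hn. injection E. auto.
Qed.

Lemma cont_const k z t : cont (fun _ _ => k) z t.
Proof. unfold cont, uncurry2. apply filterlim_const. Qed.

Lemma cont_t z t : cont (fun _ s => s) z t.
Proof.
  unfold cont, uncurry2. intros P [eps HP]. exists eps. intros [x s] [_ Hs] _. apply HP. exact Hs.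
Qed.

Lemma cont_ext F G z t : (forall x s, F x s = G x s) -> cont F z t -> cont G z t.
Proof.
  intros E H. unfold cont, uncurry2 in *. rewrite <- E.
  eapply filterlim_ext; [|exact H]. intros; simpl; auto.
Qed.

Lemma cont_max F G z t : cont F z t -> cont G z t -> cont (fun x s => Rmax (F x s) (G x s)) z t.
Proof.
  intros HF HG. unfold cont, uncurry2 in *.
  apply (filterlim_comp_2 _ _ Rmax HF HG).
  intros P [eps HP]. exists (fun u => Rabs (u - F z t) < eps) (fun u => Rabs (u - G z t) < eps).
  - exists eps. intros; auto.
  - exists eps. intros; auto.
  - intros u v Hu Hv. apply HP. simpl. unfold ball; simpl; unfold AbsRing_ball, abs, minus, plus, opp; simpl.
    unfold Rmax; repeat destruct Rle_dec; apply Rabs_def2 in Hu; apply Rabs_def2 in Hv; apply Rabs_def1; lra.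
Qed.

Lemma per_nat (F : R -> R -> R) t : (forall z t, F (z + 2*PI) t = F z t) ->
  forall n z, F (z + INR n * (2*PI)) t = F z t /\ F (z - INR n * (2*PI)) t = F z t.
Proof.
  intros HP n. induction n as [|n IH]; intro z.
  - simpl. split; f_equal; ring.
  - rewrite S_INR. split.
    + replace (z + (INR n + 1) * (2*PI)) with ((z + INR n * (2*PI)) + 2*PI) by ring.
      rewrite HP. apply IH.
    + rewrite <- (HP (z - (INR n + 1) * (2 * PI))).
      replace (z - (INR n + 1) * (2 * PI) + 2*PI) with (z - INR n * (2*PI)) by ring.
      apply IH.
Qed.

Lemma Z_nat k : exists n : nat, IZR k = INR n \/ IZR k = - INR n.
Proof.
  destruct k as [|p|p].
  - exists O. left. simpl. auto.
  - exists (Pos.to_nat p). left. rewrite INR_IZR_INZ. rewrite positive_nat_Z. auto.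
  - exists (Pos.to_nat p). right. rewrite INR_IZR_INZ. rewrite positive_nat_Z.
    rewrite <- opp_IZR. auto.
Qed.

Lemma per_reduce (F : R -> R -> R) t : (forall z t, F (z + 2*PI) t = F z t) ->
  forall z, exists z', 0 <= z' <= 2*PI /\ F z' t = F z t.
Proof.
  intros HP z. pose proof PI_RGT_0 as Hpi.
  destruct (base_Int_part (z / (2*PI))) as [H1 H2].
  set (k := Int_part (z / (2*PI))) in *.
  exists (z - IZR k * (2*PI)). split.
  - assert (z = (z/(2*PI)) * (2*PI)) by (field; lra).
    split; nra.
  - destruct (Z_nat k) as [n [E|E]]; rewrite E.
    + apply (per_nat F t HP n z).
    + replace (z - - INR n * (2*PI)) with (z + INR n * (2*PI)) by ring.
      apply (per_nat F t HP n z).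
Qed.

Lemma first_time (F : R -> R -> R) (t1 l : R) :
  0 <= t1 ->
  (forall z t, 0 <= t <= t1 -> cont F z t) ->
  (forall z t, F (z + 2*PI) t = F z t) ->
  (forall z, F z 0 < l) ->
  (exists z1, l <= F z1 t1) ->
  exists zs ts, 0 < ts <= t1 /\ F zs ts = l /\ (forall y, F y ts <= l) /\
     (forall y s, 0 <= s < ts -> F y s < l).
Proof.
  intros Ht1 Hc HP H0 [z1 Hz1].
  set (A := fun t => 0 <= t <= t1 /\ exists z, l <= F z t).
  destruct (Glb_Rbar_correct A) as [Hlb Hglb].
  assert (HA1 : A t1) by (split; [lra| exists z1; auto]).
  assert (Hg0 : Rbar_le 0 (Glb_Rbar A)).
  { apply Hglb. intros x [Hx _]. simpl. lra. }
  assert (Hg1 : Rbar_le (Glb_Rbar A) t1) by (apply Hlb; auto).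
  destruct (Glb_Rbar A) as [g| |] eqn:Eg; simpl in Hg0, Hg1; try contradiction.
  assert (Happ : forall n : nat, exists p : R * R,
     0 <= snd p <= t1 /\ l <= F (fst p) (snd p) /\ 0 <= fst p <= 2*PI /\
     g <= snd p < g + / INR (S n)).
  { intro n. assert (Hn : 0 < / INR (S n)) by (apply Rinv_0_lt_compat, lt_0_INR; lia).
    destruct (classic (exists t, A t /\ t < g + / INR (S n))) as [[t [[Ht [z Hz]] Hlt]]|Hno].
    - destruct (per_reduce F t HP z) as [z' [Hz' E]].
      exists (z', t). simpl. split; [auto|]. split; [rewrite E; auto|]. split; [auto|].
      split; [|auto]. assert (Rbar_le g t) by (apply Hlb; split; [auto| exists z; auto]). simpl in H; lra.
    - exfalso. assert (Rbar_le (g + / INR (S n)) g).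
      { apply Hglb. intros x Hx. simpl. apply Rnot_lt_le. intro. apply Hno. exists x; auto. }
      unfold Rbar_le in H. lra. }
  set (seq := fun n => proj1_sig (constructive_indefinite_description _ (Happ n))).
  assert (Hseq : forall n, 0 <= snd (seq n) <= t1 /\ l <= F (fst (seq n)) (snd (seq n)) /\
     0 <= fst (seq n) <= 2*PI /\ g <= snd (seq n) < g + / INR (S n)).
  { intro n. unfold seq. destruct constructive_indefinite_description as [p Hp]. simpl. exact Hp. }
  destruct (Bolzano_Weierstrass (fun n => fst (seq n)) (fun c => 0 <= c <= 2*PI) (compact_P3 0 (2*PI)))
    as [zl Hzl].
  { intro n. apply Hseq. }
  assert (Hgl : l <= F zl g).
  { apply Rnot_lt_le. intro Hlt.
    destruct (cont_ed F zl g (Hc zl g ltac:(lra)) (l - F zl g) ltac:(lra)) as [del [Hdel Hd]].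
    destruct (archimed_cor1 del Hdel) as [N [HN HN0]].
    destruct (Hzl (disc zl (mkposreal del Hdel)) N) as [p [Hp Hv]].
    { exists (mkposreal del Hdel). intros y Hy. exact Hy. }
    destruct (Hseq p) as [Hs1 [Hs2 [Hs3 Hs4]]].
    assert (/ INR (S p) <= / INR N).
    { apply Rinv_le_contravar. apply lt_0_INR; lia. apply le_INR; lia. }
    assert (Hq : Rabs (F (fst (seq p)) (snd (seq p)) - F zl g) < l - F zl g).
    { apply Hd. lra. exact Hv. apply Rabs_def1; lra. }
    apply Rabs_def2 in Hq. lra. }
  assert (Hgpos : 0 < g).
  { destruct Hg0 as [Hg0|Hg0]; auto. subst g. specialize (H0 zl). lra. }
  assert (Hbelow : forall y s, 0 <= s < g -> F y s < l).
  { intros y s Hs. apply Rnot_le_lt. intro Hle.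
    assert (Rbar_le g s) by (apply Hlb; split; [lra| exists y; auto]). simpl in H; lra. }
  assert (Hmax : forall y, F y g <= l).
  { intros y. apply Rnot_lt_le. intro Hlt.
    destruct (cont_ed F y g (Hc y g ltac:(lra)) (F y g - l) ltac:(lra)) as [del [Hdel Hd]].
    set (s := g - Rmin del g / 2).
    assert (0 < Rmin del g) by (apply Rmin_pos; lra).
    assert (Rmin del g <= del) by apply Rmin_l. assert (Rmin del g <= g) by apply Rmin_r.
    assert (Hq : Rabs (F y s - F y g) < F y g - l).
    { apply Hd. unfold s; lra. rewrite Rminus_eq_0, Rabs_R0; lra. unfold s; apply Rabs_def1; lra. }
    apply Rabs_def2 in Hq. specialize (Hbelow y s ltac:(unfold s; lra)). lra. }
  exists zl, g. split; [lra|]. split; [apply Rle_antisym; auto|]. split; auto.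
Qed.


Lemma isd_mult (f g : R -> R) (x df dg : R) : is_derive f x df -> is_derive g x dg ->
  is_derive (fun y => f y * g y) x (df * g x + f x * dg).
Proof. intros H1 H2. exact (is_derive_mult f g x df dg H1 H2 Rmult_comm). Qed.
Lemma isd_minus (f g : R -> R) (x df dg : R) : is_derive f x df -> is_derive g x dg ->
  is_derive (fun y => f y - g y) x (df - dg).
Proof. intros H1 H2. exact (is_derive_minus f g x df dg H1 H2). Qed.
Lemma isd_plus (f g : R -> R) (x df dg : R) : is_derive f x df -> is_derive g x dg ->
  is_derive (fun y => f y + g y) x (df + dg).
Proof. intros H1 H2. exact (is_derive_plus f g x df dg H1 H2). Qed.
Lemma isd_eq (f : R -> R) (x l l' : R) : is_derive f x l -> l = l' -> is_derive f x l'.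
Proof. intros H E; subst; auto. Qed.

Lemma deriv_pos_right f x d : is_derive f x d -> 0 < d ->
  exists del, 0 < del /\ forall k, 0 < k < del -> f x < f (x + k).
Proof.
  intros H Hd. apply is_derive_Reals in H.
  destruct (H (d/2) ltac:(lra)) as [del Hdel].
  exists del. split; [apply cond_pos|]. intros k Hk.
  assert (Hk0 : k <> 0) by lra.
  specialize (Hdel k Hk0 ltac:(rewrite Rabs_right; lra)).
  apply Rabs_def2 in Hdel. destruct Hdel as [_ Hl].
  assert (0 < (f (x + k) - f x) / k) by lra.
  assert (0 < f (x + k) - f x).
  { replace (f (x + k) - f x) with ((f (x + k) - f x) / k * k) by (field; lra). nra. }
  lra.
Qed.

Lemma deriv_neg_left f x d : is_derive f x d -> d < 0 ->
  exists del, 0 < del /\ forall k, 0 < k < del -> f x < f (x - k).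
Proof.
  intros H Hd. apply is_derive_Reals in H.
  destruct (H (-d/2) ltac:(lra)) as [del Hdel].
  exists del. split; [apply cond_pos|]. intros k Hk.
  assert (Hk0 : -k <> 0) by lra.
  specialize (Hdel (-k) Hk0 ltac:(rewrite Rabs_left; lra)).
  apply Rabs_def2 in Hdel. destruct Hdel as [Hl _].
  replace (x + - k) with (x - k) in Hl by ring.
  assert ((f (x - k) - f x) / - k < 0) by lra.
  assert (0 < f (x - k) - f x).
  { replace (f (x - k) - f x) with ((f (x - k) - f x) / - k * - k) by (field; lra). nra. }
  lra.
Qed.

Lemma deriv_pos_left f x d : is_derive f x d -> 0 < d ->
  exists del, 0 < del /\ forall k, 0 < k < del -> f (x - k) < f x.
Proof.
  intros H Hd. apply is_derive_Reals in H.
  destruct (H (d/2) ltac:(lra)) as [del Hdel].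
  exists del. split; [apply cond_pos|]. intros k Hk.
  assert (Hk0 : -k <> 0) by lra.
  specialize (Hdel (-k) Hk0 ltac:(rewrite Rabs_left; lra)).
  apply Rabs_def2 in Hdel. destruct Hdel as [_ Hl].
  replace (x + - k) with (x - k) in Hl by ring.
  assert (0 < (f (x - k) - f x) / - k) by lra.
  assert (f (x - k) - f x < 0).
  { replace (f (x - k) - f x) with ((f (x - k) - f x) / - k * - k) by (field; lra). nra. }
  lra.
Qed.

Lemma time_deriv_nonneg f ts d : 0 < ts -> is_derive f ts d ->
  (forall s, 0 <= s < ts -> f s < f ts) -> 0 <= d.
Proof.
  intros Hts H Hb. apply Rnot_lt_le. intro Hd.
  destruct (deriv_neg_left f ts d H Hd) as [del [Hdel Hk]].
  set (k := Rmin del ts / 2).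
  assert (0 < Rmin del ts) by (apply Rmin_pos; lra).
  assert (Rmin del ts <= del) by apply Rmin_l. assert (Rmin del ts <= ts) by apply Rmin_r.
  specialize (Hk k ltac:(unfold k; lra)). specialize (Hb (ts - k) ltac:(unfold k; lra)). lra.
Qed.

Lemma max_deriv0 g x d : is_derive g x d -> (forall y, g y <= g x) -> d = 0.
Proof.
  intros H Hm. destruct (Rtotal_order d 0) as [Hl|[He|Hg]]; auto; exfalso.
  - destruct (deriv_neg_left g x d H Hl) as [del [Hdel Hk]].
    specialize (Hk (del/2) ltac:(lra)). specialize (Hm (x - del/2)). lra.
  - destruct (deriv_pos_right g x d H Hg) as [del [Hdel Hk]].
    specialize (Hk (del/2) ltac:(lra)). specialize (Hm (x + del/2)). lra.
Qed.

Lemma spatial_max (num den num' den' : R -> R) (zs n2 d2 : R) :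
  (forall x, is_derive num x (num' x)) -> (forall x, is_derive den x (den' x)) ->
  (forall x, 0 < den x) ->
  is_derive num' zs n2 -> is_derive den' zs d2 ->
  (forall y, num y / den y <= num zs / den zs) ->
  num' zs * den zs - num zs * den' zs = 0 /\ n2 * den zs - num zs * d2 <= 0.
Proof.
  intros Hn Hd Hpos Hn2 Hd2 Hm.
  set (h := fun x => (num' x * den x - num x * den' x) / den x ^ 2).
  assert (Hg : forall x, is_derive (fun y => num y / den y) x (h x)).
  { intro x. unfold h. apply is_derive_div; auto. specialize (Hpos x); lra. }
  assert (H0 : h zs = 0) by (apply (max_deriv0 (fun y => num y / den y) zs); auto).
  assert (Hnum0 : num' zs * den zs - num zs * den' zs = 0).
  { specialize (Hpos zs).
    replace (num' zs * den zs - num zs * den' zs) with (h zs * den zs ^ 2) by (unfold h; field; lra).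
    rewrite H0; ring. }
  split; auto.
  apply Rnot_lt_le. intro Hc.
  pose proof (is_derive_div (fun x => num' x * den x - num x * den' x) (fun x => den x ^ 2) zs _ _
    (isd_minus _ _ zs _ _ (isd_mult _ _ zs _ _ Hn2 (Hd zs)) (isd_mult _ _ zs _ _ (Hn zs) Hd2))
    (is_derive_pow den 2 zs _ (Hd zs)) ltac:(specialize (Hpos zs); apply pow_nonzero; lra)) as Hh.
  change (fun t : R => (num' t * den t - num t * den' t) / den t ^ 2) with h in Hh.
  cbv beta in Hh. rewrite Hnum0 in Hh.
  match type of Hh with is_derive _ _ ?d => assert (Hpos' : 0 < d) end.
  { assert (Hdd : 0 < den zs) by apply Hpos.
    apply Rdiv_lt_0_compat; [|apply pow_lt; apply pow_lt; lra].
    replace ((n2 * den zs + num' zs * den' zs - (num' zs * den' zs + num zs * d2)) * den zs ^ 2 -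
      0 * (INR 2 * den' zs * den zs ^ Init.Nat.pred 2)) with ((n2 * den zs - num zs * d2) * den zs^2) by ring.
    apply Rmult_lt_0_compat; [lra| apply pow_lt; lra]. }
  destruct (deriv_pos_right h zs _ Hh Hpos') as [del [Hdel Hk]].
  destruct (MVT_cor2 (fun y => num y / den y) h zs (zs + del/2) ltac:(lra)) as [c [Hc1 Hc2]].
  { intros c _. apply is_derive_Reals. apply Hg. }
  specialize (Hk (c - zs) ltac:(lra)). replace (zs + (c - zs)) with c in Hk by ring.
  rewrite H0 in Hk. specialize (Hm (zs + del/2)). nra.
Qed.

Definition good (T : Rbar) (f : R -> R -> R) : Prop :=
  (forall z t, 0 <= t -> Rbar_lt t T -> 0 < f z t) /\
  (forall z t, 0 <= t -> Rbar_lt t T -> cont f z t) /\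
  (forall t x, 0 <= t -> Rbar_lt t T -> is_derive (fun y => f y t) x (dz f x t)) /\
  (forall t x, 0 <= t -> Rbar_lt t T -> is_derive (fun y => dz f y t) x (dz (dz f) x t)) /\
  (forall z t, 0 < t -> Rbar_lt t T -> is_derive (fun s => f z s) t (dt f z t)) /\
  periodic_z f.

Lemma good_of T phi a b c f : RF_solution T phi a b c ->
  (f = phi \/ f = a \/ f = b \/ f = c) -> good T f.
Proof.
  intros [_ [H _]] Hf. destruct (H f Hf) as [[Hs1 Hs2] [Hper Hpos]].
  split; [exact Hpos|]. split; [|split; [|split; [|split]]]; try exact Hper.
  - intros z t Ht HT. exact (proj2 (Hs2 O z t Ht HT)).
  - intros t x Ht HT. apply Derive_correct. exact (proj1 (Hs2 O x t Ht HT)).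
  - intros t x Ht HT. apply Derive_correct. exact (proj1 (Hs2 1%nat x t Ht HT)).
  - intros z t Ht HT. apply Derive_correct. exact (proj1 (proj2 (Hs1 O O z t Ht HT))).
Qed.

Lemma dss_eq T phi P z t : good T phi -> good T P -> 0 <= t -> Rbar_lt t T ->
  dss phi P z t = ((dz (dz P) z t * phi z t - dz P z t * dz phi z t) / phi z t ^ 2) / phi z t.
Proof.
  intros Hphi HP Ht HT. unfold dss, ds at 1. f_equal. unfold dz at 1.
  apply is_derive_unique. unfold ds.
  apply (is_derive_div (fun x => dz P x t) (fun x => phi x t)).
  - apply HP; auto.
  - apply Hphi; auto.
  - pose proof (proj1 Hphi z t Ht HT). lra.
Qed.

Lemma chat_max T c : good T c -> Rbar_lt 0 T ->
  (forall z, c z 0 <= chat c 0) /\ 0 < chat c 0.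
Proof.
  intros [Hpos [Hcont [Hz [_ [_ Hper]]]]] HT.
  destruct (continuity_ab_maj (fun z => c z 0) 0 (2*PI)) as [Mx [HM HMx]].
  { pose proof PI_RGT_0; lra. }
  { intros x _. apply continuity_pt_filterlim. apply (ex_derive_continuous (fun z => c z 0)).
    eexists. apply Hz; auto; lra. }
  assert (Hall : forall z, c z 0 <= c Mx 0).
  { intro z. destruct (per_reduce c 0 Hper z) as [z' [Hz' E]]. rewrite <- E. apply HM. auto. }
  assert (E : Lub_Rbar (fun y => exists z, y = c z 0) = Finite (c Mx 0)).
  { apply is_lub_Rbar_unique. split.
    - intros y [z ->]. simpl. apply Hall.
    - intros b Hb. apply Hb. exists Mx. auto. }
  unfold chat. rewrite E. simpl. split; auto. apply Hpos; auto; lra.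
Qed.

Lemma Rbar_lt_le_t (t t1 : R) T : t <= t1 -> Rbar_lt t1 T -> Rbar_lt t T.
Proof. intros H1 H2. apply (Rbar_le_lt_trans _ (Finite t1)); simpl; auto. Qed.

Lemma spatial_ratio T P Q zs ts : good T P -> good T Q -> 0 <= ts -> Rbar_lt ts T ->
  (forall y, P y ts / Q y ts <= P zs ts / Q zs ts) ->
  dz P zs ts * Q zs ts - P zs ts * dz Q zs ts = 0 /\
  dz (dz P) zs ts * Q zs ts - P zs ts * dz (dz Q) zs ts <= 0.
Proof.
  intros HP HQ Ht HT Hm.
  apply (spatial_max (fun y => P y ts) (fun y => Q y ts) (fun y => dz P y ts) (fun y => dz Q y ts)).
  - intro x. apply HP; auto.
  - intro x. apply HQ; auto.
  - intro x. apply HQ; auto.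
  - apply HP; auto.
  - apply HQ; auto.
  - exact Hm.
Qed.

Lemma time_ratio T P Q zs ts : good T P -> good T Q -> 0 < ts -> Rbar_lt ts T ->
  (forall s, 0 <= s < ts -> P zs s / Q zs s < P zs ts / Q zs ts) ->
  0 <= dt P zs ts * Q zs ts - P zs ts * dt Q zs ts.
Proof.
  intros HP HQ Ht HT Hb.
  assert (HQp : 0 < Q zs ts) by (apply HQ; auto; lra).
  assert (H := is_derive_div (fun s => P zs s) (fun s => Q zs s) ts _ _
     (proj1 (proj2 (proj2 (proj2 (proj2 HP)))) zs ts Ht HT)
     (proj1 (proj2 (proj2 (proj2 (proj2 HQ)))) zs ts Ht HT) ltac:(lra)).
  pose proof (time_deriv_nonneg _ ts _ Ht H Hb) as H0.
  assert (0 < Q zs ts ^ 2) by (apply pow_lt; lra).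
  apply Rmult_le_reg_r with (/ Q zs ts ^ 2). apply Rinv_0_lt_compat; auto.
  rewrite Rmult_0_l. exact H0.
Qed.

Lemma pair_alg (ph P Q U ph1 P1 Q1 U1 P2 Q2 RP RQ dP dQ SP SQ : R) :
  0 < ph -> 0 < P -> 0 < Q -> 0 < U ->
  SP = (U1/ph)/U + (Q1/ph)/Q -> SQ = (U1/ph)/U + (P1/ph)/P ->
  dP = ((P2*ph - P1*ph1)/ph^2)/ph + (P1/ph)*SP + RP ->
  dQ = ((Q2*ph - Q1*ph1)/ph^2)/ph + (Q1/ph)*SQ + RQ ->
  P1*Q - P*Q1 = 0 ->
  dP*Q - P*dQ = (P2*Q - P*Q2)/ph^2 + (RP*Q - P*RQ).
Proof.
  intros Hph HP HQ HU -> -> -> -> H.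
  assert (P1 = P * Q1 / Q) by (field_simplify; [|lra]; apply (Rmult_eq_reg_r Q); [|lra]; field_simplify; lra).
  subst P1. field. lra.
Qed.

Lemma react_id P Q U : 0 < P -> 0 < Q -> 0 < U ->
  (- (2 * (P ^ 4 - (U ^ 2 - Q ^ 2) ^ 2) / (P * U ^ 2 * Q ^ 2))) * Q
  - P * (- (2 * (Q ^ 4 - (P ^ 2 - U ^ 2) ^ 2) / (Q * P ^ 2 * U ^ 2)))
  = -4 * (P^2 - Q^2) * (P^2 + Q^2 - U^2) / (P * U^2 * Q).
Proof. intros. field. lra. Qed.

Lemma order_case T phi P U c zs ts SP SQ RQ :
  good T phi -> good T P -> good T U -> good T c -> 0 < ts -> Rbar_lt ts T ->
  dt P zs ts = dss phi P zs ts + ds phi P zs ts * SP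
     - 2 * (P zs ts ^ 4 - (U zs ts ^ 2 - c zs ts ^ 2) ^ 2) / (P zs ts * U zs ts ^ 2 * c zs ts ^ 2) ->
  SP = ds phi U zs ts / U zs ts + ds phi c zs ts / c zs ts ->
  dt c zs ts = dss phi c zs ts + ds phi c zs ts * SQ - RQ ->
  RQ = 2 * (c zs ts ^ 4 - (P zs ts ^ 2 - U zs ts ^ 2) ^ 2) / (c zs ts * P zs ts ^ 2 * U zs ts ^ 2) ->
  SQ = ds phi U zs ts / U zs ts + ds phi P zs ts / P zs ts ->
  (forall y, P y ts / c y ts <= P zs ts / c zs ts) ->
  (forall s, 0 <= s < ts -> P zs s / c zs s < P zs ts / c zs ts) ->
  1 < P zs ts / c zs ts -> U zs ts <= P zs ts -> False.
Proof.
  intros Hphi HP HU Hc Hts HT HdP HSP HdQ HRQ HSQ Hsp Htm Hgt HUP.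
  subst RQ.
  destruct (spatial_ratio T P c zs ts HP Hc ltac:(lra) HT Hsp) as [E1 E2].
  pose proof (time_ratio T P c zs ts HP Hc Hts HT Htm) as E3.
  rewrite (dss_eq T phi P zs ts Hphi HP ltac:(lra) HT) in HdP.
  rewrite (dss_eq T phi c zs ts Hphi Hc ltac:(lra) HT) in HdQ.
  assert (Hph : 0 < phi zs ts) by (apply Hphi; auto; lra).
  assert (HPp : 0 < P zs ts) by (apply HP; auto; lra).
  assert (HUp : 0 < U zs ts) by (apply HU; auto; lra).
  assert (Hcp : 0 < c zs ts) by (apply Hc; auto; lra).
  unfold ds in HSP, HSQ.
  pose proof (pair_alg (phi zs ts) (P zs ts) (c zs ts) (U zs ts) (dz phi zs ts) (dz P zs ts) (dz c zs ts)
    (dz U zs ts) (dz (dz P) zs ts) (dz (dz c) zs ts)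
    (- (2 * (P zs ts ^ 4 - (U zs ts ^ 2 - c zs ts ^ 2) ^ 2) / (P zs ts * U zs ts ^ 2 * c zs ts ^ 2)))
    (- (2 * (c zs ts ^ 4 - (P zs ts ^ 2 - U zs ts ^ 2) ^ 2) / (c zs ts * P zs ts ^ 2 * U zs ts ^ 2)))
    (dt P zs ts) (dt c zs ts) SP SQ Hph HPp Hcp HUp HSP HSQ) as Hpa.
  unfold ds in HdP, HdQ.
  rewrite react_id in Hpa by auto.
  specialize (Hpa ltac:(rewrite HdP; ring) ltac:(rewrite HdQ; ring) E1).
  assert (Hsq : 0 < phi zs ts ^ 2) by (apply pow_lt; auto).
  assert ((dz (dz P) zs ts * c zs ts - P zs ts * dz (dz c) zs ts) / phi zs ts ^ 2 <= 0).
  { apply Rmult_le_reg_r with (phi zs ts ^ 2); auto. unfold Rdiv. rewrite Rmult_assoc, Rinv_l by lra. lra. }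
  assert (HPc : c zs ts < P zs ts).
  { apply (Rmult_lt_compat_r (c zs ts)) in Hgt; auto. unfold Rdiv in Hgt.
    rewrite Rmult_assoc, Rinv_l, Rmult_1_r, Rmult_1_l in Hgt by lra. auto. }
  assert (0 < (P zs ts ^ 2 - c zs ts ^ 2) * (P zs ts ^ 2 + c zs ts ^ 2 - U zs ts ^ 2)).
  { apply Rmult_lt_0_compat; nra. }
  assert (0 < P zs ts * U zs ts ^ 2 * c zs ts) by (apply Rmult_lt_0_compat; [apply Rmult_lt_0_compat|]; nra).
  assert (-4 * (P zs ts ^ 2 - c zs ts ^ 2) * (P zs ts ^ 2 + c zs ts ^ 2 - U zs ts ^ 2) /
         (P zs ts * U zs ts ^ 2 * c zs ts) < 0).
  { unfold Rdiv. rewrite !Rmult_assoc. 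
    assert (0 < (P zs ts ^ 2 - c zs ts ^ 2) * ((P zs ts ^ 2 + c zs ts ^ 2 - U zs ts ^ 2) *
       / (P zs ts * U zs ts ^ 2 * c zs ts))).
    { rewrite <- Rmult_assoc. apply Rmult_lt_0_compat; auto. apply Rinv_0_lt_compat; auto. }
    lra. }
  lra.
Qed.

Lemma cont_div T P Q z t : good T P -> good T Q -> 0 <= t -> Rbar_lt t T ->
  cont (fun x s => P x s / Q x s) z t.
Proof.
  intros HP HQ Ht HT. apply (cont_ext (fun x s => P x s * / Q x s)); [intros; reflexivity|].
  apply cont_mult. apply HP; auto. apply cont_inv. apply HQ; auto.
  pose proof (proj1 HQ z t Ht HT). lra.
Qed.

Lemma ratio_le1 x y : 0 < y -> (x / y <= 1 <-> x <= y).
Proof.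
  intros Hy. split; intro H.
  - apply (Rmult_le_compat_r y) in H; [|lra]. unfold Rdiv in H.
    rewrite Rmult_assoc, Rinv_l, Rmult_1_r, Rmult_1_l in H by lra. auto.
  - apply (Rmult_le_reg_r y); auto. unfold Rdiv. rewrite Rmult_assoc, Rinv_l by lra. lra.
Qed.

Lemma order_pres T phi a b c : RF_solution T phi a b c ->
  (forall z, a z 0 <= c z 0 /\ b z 0 <= c z 0) ->
  forall z t, 0 <= t -> Rbar_lt t T -> a z t <= c z t /\ b z t <= c z t.
Proof.
  intros Hsol H0 z1 t1 Ht1 HT1.
  pose proof (good_of T phi a b c phi Hsol ltac:(auto)) as Gphi.
  pose proof (good_of T phi a b c a Hsol ltac:(auto)) as Ga.
  pose proof (good_of T phi a b c b Hsol ltac:(auto)) as Gb.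
  pose proof (good_of T phi a b c c Hsol ltac:(auto)) as Gc.
  set (F := fun z t => Rmax (a z t / c z t) (b z t / c z t)).
  assert (Hc1 : 0 < c z1 t1) by (apply Gc; auto).
  cut (F z1 t1 <= 1).
  { intro H. unfold F in H. split; apply (ratio_le1 _ _ Hc1).
    - eapply Rle_trans; [apply Rmax_l|exact H].
    - eapply Rle_trans; [apply Rmax_r|exact H]. }
  apply Rnot_lt_le. intro Hgt.
  destruct (first_time F t1 (F z1 t1) Ht1) as [zs [ts [Hts [HFs [Hsp Htm]]]]].
  - intros z t Ht. unfold F. apply cont_max; apply (cont_div T); auto; try lra;
      apply (Rbar_lt_le_t t t1); auto; lra.
  - intros z t. unfold F. destruct Ga as [_ [_ [_ [_ [_ Pa]]]]].
    destruct Gb as [_ [_ [_ [_ [_ Pb]]]]]. destruct Gc as [_ [_ [_ [_ [_ Pc]]]]].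
    rewrite Pa, Pb, Pc. auto.
  - intro z. destruct (H0 z) as [Ha Hb]. assert (0 < c z 0) by (apply Gc; [lra| apply (Rbar_lt_le_t 0 t1 T); auto; lra]).
    apply Rle_lt_trans with 1; [|exact Hgt]. unfold F. apply Rmax_lub; apply ratio_le1; auto.
  - exists z1. lra.
  - assert (HT : Rbar_lt ts T) by (apply (Rbar_lt_le_t ts t1); auto; lra).
    destruct Hsol as [_ [_ HRF]].
    destruct (HRF zs ts ltac:(lra) HT) as [Ea [Eb [Ec _]]].
    unfold F at 1 in HFs. unfold Rmax in HFs. destruct Rle_dec as [Hle|Hle].
    +
      apply (order_case T phi b a c zs ts _ _ _ Gphi Gb Ga Gc ltac:(lra) HT Eb eq_refl Ec).
      * unfold Rdiv; f_equal; [f_equal; ring| f_equal; ring].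
      * ring.
      * intro y. rewrite HFs. eapply Rle_trans; [apply Rmax_r|apply Hsp].
      * intros s Hs. rewrite HFs. eapply Rle_lt_trans; [apply Rmax_r|apply Htm; auto].
      * rewrite HFs. auto.
      * assert (Hcs : 0 < c zs ts) by (apply Gc; auto; lra).
        apply (Rmult_le_reg_r (/ c zs ts)); [apply Rinv_0_lt_compat; auto|]. exact Hle.
    + apply (order_case T phi a b c zs ts _ _ _ Gphi Ga Gb Gc ltac:(lra) HT Ea eq_refl Ec).
      * reflexivity.
      * ring.
      * intro y. rewrite HFs. eapply Rle_trans; [apply Rmax_l|apply Hsp].
      * intros s Hs. rewrite HFs. eapply Rle_lt_trans; [apply Rmax_l|apply Htm; auto].
      * rewrite HFs. auto.
      * assert (Hcs : 0 < c zs ts) by (apply Gc; auto; lra).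
        apply (Rmult_le_reg_r (/ c zs ts)); [apply Rinv_0_lt_compat; auto|]. lra.
Qed.

Lemma isd_const (k x : R) : is_derive (fun _ : R => k) x 0.
Proof. exact (is_derive_const k x). Qed.
Lemma isd_id (x : R) : is_derive (fun t : R => t) x 1.
Proof. exact (is_derive_id x). Qed.

Lemma cont_id_pow T c z t : good T c -> 0 <= t -> Rbar_lt t T ->
  forall k, cont (fun x s => c x s ^ 2 + k * s) z t.
Proof.
  intros Gc Ht HT k. apply cont_plus.
  - apply (cont_ext (fun x s => c x s * (c x s * 1))); [intros; simpl; ring|].
    apply cont_mult; [apply Gc; auto|]. apply cont_mult; [apply Gc; auto| apply cont_const].
  - apply cont_mult; [apply cont_const| apply cont_t].
Qed.

Lemma c_bound T phi a b c K : RF_solution T phi a b c ->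
  (forall z t, 0 <= t -> Rbar_lt t T -> a z t <= c z t /\ b z t <= c z t) ->
  (forall z, c z 0 <= K) ->
  forall z t, 0 <= t -> Rbar_lt t T -> c z t ^ 2 + 4 * t <= K ^ 2.
Proof.
  intros Hsol Hord H0 z1 t1 Ht1 HT1.
  pose proof (good_of T phi a b c phi Hsol ltac:(auto)) as Gphi.
  pose proof (good_of T phi a b c a Hsol ltac:(auto)) as Ga.
  pose proof (good_of T phi a b c b Hsol ltac:(auto)) as Gb.
  pose proof (good_of T phi a b c c Hsol ltac:(auto)) as Gc.
  assert (HT0 : Rbar_lt 0 T) by (apply (Rbar_lt_le_t 0 t1 T); auto).
  assert (Hc0 : forall z, 0 < c z 0) by (intro; apply Gc; auto; lra).
  assert (HK : 0 < K) by (specialize (H0 0); specialize (Hc0 0); lra).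
  apply Rnot_lt_le. intro Hgt.
  assert (Ht1p : 0 < t1).
  { destruct Ht1 as [|E]; auto. subst t1. specialize (H0 z1). specialize (Hc0 z1). nra. }
  set (del := (c z1 t1 ^ 2 + 4 * t1 - K ^ 2) / (2 * t1)).
  assert (Hdel : 0 < del) by (unfold del; apply Rdiv_lt_0_compat; lra).
  assert (Hdt : del * t1 = (c z1 t1 ^ 2 + 4 * t1 - K ^ 2) / 2) by (unfold del; field; lra).
  set (F := fun x s => c x s ^ 2 + (4 - del) * s).
  destruct (first_time F t1 (F z1 t1) Ht1) as [zs [ts [Hts [HFs [Hsp Htm]]]]].
  - intros z t Ht. apply cont_id_pow with T; auto; try lra. apply (Rbar_lt_le_t t t1); auto; lra.
  - intros z t. unfold F. destruct Gc as [_ [_ [_ [_ [_ Pc]]]]]. rewrite Pc. auto.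
  - intro z. unfold F at 1. specialize (H0 z). specialize (Hc0 z).
    assert (c z 0 ^ 2 <= K ^ 2) by nra. unfold F. nra.
  - exists z1. lra.
  - assert (HT : Rbar_lt ts T) by (apply (Rbar_lt_le_t ts t1); auto; lra).
    destruct Hsol as [_ [_ HRF]].
    destruct (HRF zs ts ltac:(lra) HT) as [_ [_ [Ec _]]].
    rewrite (dss_eq T phi c zs ts Gphi Gc ltac:(lra) HT) in Ec. unfold ds in Ec.
    assert (Hcs : 0 < c zs ts) by (apply Gc; auto; lra).
    assert (Has : 0 < a zs ts) by (apply Ga; auto; lra).
    assert (Hbs : 0 < b zs ts) by (apply Gb; auto; lra).
    assert (Hph : 0 < phi zs ts) by (apply Gphi; auto; lra).
    destruct (Hord zs ts ltac:(lra) HT) as [Hac Hbc].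
    destruct (spatial_max (fun y => c y ts) (fun _ => 1) (fun y => dz c y ts) (fun _ => 0) zs
      (dz (dz c) zs ts) 0) as [E1 E2].
    + intro x. apply Gc; auto; lra.
    + intro x. apply isd_const.
    + intro; lra.
    + apply Gc; auto; lra.
    + apply isd_const.
    + intro y. rewrite !Rdiv_1_r. assert (Hcy : 0 < c y ts) by (apply Gc; auto; lra).
      specialize (Hsp y). rewrite <- HFs in Hsp. unfold F in Hsp. nra.
    + rewrite Rmult_1_r, Rmult_0_r, Rminus_0_r in E1, E2.
      pose proof (time_deriv_nonneg (fun s => F zs s) ts _ (proj1 Hts)
        (isd_plus _ _ ts _ _ (is_derive_pow (fun s => c zs s) 2 ts _
           (proj1 (proj2 (proj2 (proj2 (proj2 Gc)))) zs ts ltac:(lra) HT))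
           (isd_mult _ _ ts _ _ (isd_const (4 - del) ts) (isd_id ts)))) as Htd.
      specialize (Htd ltac:(intros s Hs; cbv beta; rewrite HFs; apply Htm; auto)).
      simpl in Htd. rewrite E1 in Ec.
      set (N := c zs ts ^ 4 - (a zs ts ^ 2 - b zs ts ^ 2) ^ 2) in Ec.
      assert (HN : a zs ts ^ 2 * b zs ts ^ 2 <= N).
      { unfold N. replace (c zs ts ^ 4 - (a zs ts ^ 2 - b zs ts ^ 2) ^ 2) with
          ((c zs ts ^ 2 - a zs ts ^ 2 + b zs ts ^ 2) * (c zs ts ^ 2 + a zs ts ^ 2 - b zs ts ^ 2)) by ring.
        rewrite (Rmult_comm (a zs ts ^ 2)). apply Rmult_le_compat; nra. }
      assert (Hab : 0 < a zs ts ^ 2 * b zs ts ^ 2) by (apply Rmult_lt_0_compat; apply pow_lt; auto).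
      assert (HR : 2 * c zs ts * (2 * N / (c zs ts * a zs ts ^ 2 * b zs ts ^ 2)) = 4 * (N / (a zs ts ^ 2 * b zs ts ^ 2)))
        by (field; lra).
      assert (HR1 : 1 <= N / (a zs ts ^ 2 * b zs ts ^ 2)).
      { apply (Rmult_le_reg_r (a zs ts ^ 2 * b zs ts ^ 2)); auto. unfold Rdiv.
        rewrite Rmult_assoc, Rinv_l by lra. lra. }
      assert (Hss : 2 * c zs ts * (((dz (dz c) zs ts * phi zs ts - 0 * dz phi zs ts) / phi zs ts ^ 2) / phi zs ts) <= 0).
      { replace (((dz (dz c) zs ts * phi zs ts - 0 * dz phi zs ts) / phi zs ts ^ 2) / phi zs ts)
          with (dz (dz c) zs ts * / phi zs ts ^ 2) by (field; lra).
        assert (0 < / phi zs ts ^ 2) by (apply Rinv_0_lt_compat, pow_lt; auto).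
        assert (dz (dz c) zs ts * / phi zs ts ^ 2 <= 0) by nra. nra. }
      assert (Hct : 2 * c zs ts * dt c zs ts <= -4).
      { assert (Hx : 2 * c zs ts * dt c zs ts = 2 * c zs ts * (((dz (dz c) zs ts * phi zs ts - 0 * dz phi zs ts) / phi zs ts ^ 2) / phi zs ts)
           - 2 * c zs ts * (2 * N / (c zs ts * a zs ts ^ 2 * b zs ts ^ 2))) by (rewrite Ec; field; lra).
        rewrite Hx, HR. lra. }
      unfold F in Htd. nra.
Qed.

Lemma pair_id T phi P Q U zs ts SP SQ RPp RQp :
  good T phi -> good T P -> good T Q -> good T U -> 0 < ts -> Rbar_lt ts T ->
  dt P zs ts = dss phi P zs ts + ds phi P zs ts * SP - RPp ->
  SP = ds phi U zs ts / U zs ts + ds phi Q zs ts / Q zs ts ->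
  dt Q zs ts = dss phi Q zs ts + ds phi Q zs ts * SQ - RQp ->
  SQ = ds phi U zs ts / U zs ts + ds phi P zs ts / P zs ts ->
  dz P zs ts * Q zs ts - P zs ts * dz Q zs ts = 0 ->
  dt P zs ts * Q zs ts - P zs ts * dt Q zs ts =
  (dz (dz P) zs ts * Q zs ts - P zs ts * dz (dz Q) zs ts) / phi zs ts ^ 2 + (- RPp * Q zs ts + P zs ts * RQp).
Proof.
  intros Hphi HP HQ HU Hts HT HdP HSP HdQ HSQ E1.
  rewrite (dss_eq T phi P zs ts Hphi HP ltac:(lra) HT) in HdP.
  rewrite (dss_eq T phi Q zs ts Hphi HQ ltac:(lra) HT) in HdQ.
  assert (Hph : 0 < phi zs ts) by (apply Hphi; auto; lra).
  assert (HPp : 0 < P zs ts) by (apply HP; auto; lra).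
  assert (HUp : 0 < U zs ts) by (apply HU; auto; lra).
  assert (HQp : 0 < Q zs ts) by (apply HQ; auto; lra).
  unfold ds in HSP, HSQ, HdP, HdQ.
  pose proof (pair_alg (phi zs ts) (P zs ts) (Q zs ts) (U zs ts) (dz phi zs ts) (dz P zs ts) (dz Q zs ts)
    (dz U zs ts) (dz (dz P) zs ts) (dz (dz Q) zs ts) (- RPp) (- RQp)
    (dt P zs ts) (dt Q zs ts) SP SQ Hph HPp HQp HUp HSP HSQ) as Hpa.
  rewrite Hpa; [ring| rewrite HdP; ring | rewrite HdQ; ring | exact E1].
Qed.

Lemma final_ineq c a b D X Qv del :
  0 < a -> 0 < b -> 0 < c -> a <= c -> b <= c -> c ^ 2 <= D ->
  Qv = c ^ 2 / a ^ 2 - 1 -> X <= -4 * (c ^ 2 - a ^ 2) * a / (c * b ^ 2) -> 0 < del ->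
  2 * c * X / (a ^ 3 * D ^ 2) + 8 * Qv / D ^ 3 - del < 0.
Proof.
  intros Ha Hb Hc Hac Hbc HD HQ HX Hdel.
  assert (HDp : 0 < D) by nra.
  assert (Hk : 0 < 2 * c / (a ^ 3 * D ^ 2)).
  { apply Rdiv_lt_0_compat; [lra|]. apply Rmult_lt_0_compat; apply pow_lt; auto. }
  assert (H1 : 2 * c * X / (a ^ 3 * D ^ 2) <= 2 * c / (a ^ 3 * D ^ 2) * (-4 * (c ^ 2 - a ^ 2) * a / (c * b ^ 2))).
  { replace (2 * c * X / (a ^ 3 * D ^ 2)) with (2 * c / (a ^ 3 * D ^ 2) * X) by (field; lra).
    apply Rmult_le_compat_l; lra. }
  assert (E : 2 * c / (a ^ 3 * D ^ 2) * (-4 * (c ^ 2 - a ^ 2) * a / (c * b ^ 2)) + 8 * Qv / D ^ 3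
     = 8 * (c ^ 2 - a ^ 2) / (a ^ 2 * D ^ 2) * (/ D - / b ^ 2)).
  { rewrite HQ. field. repeat split; lra. }
  assert (H2 : 0 <= 8 * (c ^ 2 - a ^ 2) / (a ^ 2 * D ^ 2)).
  { apply Rdiv_le_0_compat; [nra|]. apply Rmult_lt_0_compat; apply pow_lt; auto. }
  assert (H3 : / D - / b ^ 2 <= 0).
  { assert (0 < b ^ 2) by (apply pow_lt; auto).
    assert (b ^ 2 <= D) by nra.
    assert (/ D <= / b ^ 2) by (apply Rinv_le_contravar; auto). lra. }
  assert (8 * (c ^ 2 - a ^ 2) / (a ^ 2 * D ^ 2) * (/ D - / b ^ 2) <= 0).
  { nra. } 
  lra.
Qed.

Lemma sq_le x y : 0 < x -> 0 < y -> x ^ 2 <= y ^ 2 -> x <= y.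
Proof. intros. nra. Qed.

Lemma q_bound T phi a b c K lam : RF_solution T phi a b c ->
  (forall z t, 0 <= t -> Rbar_lt t T -> a z t <= c z t /\ b z t <= c z t) ->
  (forall z t, 0 <= t -> Rbar_lt t T -> c z t ^ 2 + 4 * t <= K ^ 2) ->
  0 < K ->
  (forall z, c z 0 / a z 0 <= lam) ->
  forall z t, 0 <= t -> Rbar_lt t T ->
    (c z t ^ 2 / a z t ^ 2 - 1) / (K ^ 2 - 4 * t) ^ 2 <= (lam ^ 2 - 1) / K ^ 4.
Proof.
  intros Hsol Hord Hcb HK H0 z1 t1 Ht1 HT1.
  pose proof (good_of T phi a b c phi Hsol ltac:(auto)) as Gphi.
  pose proof (good_of T phi a b c a Hsol ltac:(auto)) as Ga.
  pose proof (good_of T phi a b c b Hsol ltac:(auto)) as Gb.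
  pose proof (good_of T phi a b c c Hsol ltac:(auto)) as Gc.
  assert (HT0 : Rbar_lt 0 T) by (apply (Rbar_lt_le_t 0 t1 T); auto).
  assert (HK4 : 0 < K ^ 4) by (apply pow_lt; auto).
  set (M := (lam ^ 2 - 1) / K ^ 4).
  set (H := fun x s => (c x s ^ 2 / a x s ^ 2 - 1) / (K ^ 2 - 4 * s) ^ 2).
  assert (HD : forall x s, 0 <= s -> Rbar_lt s T -> c x s ^ 2 <= K ^ 2 - 4 * s /\ 0 < K ^ 2 - 4 * s).
  { intros x s Hs HsT. specialize (Hcb x s Hs HsT). assert (0 < c x s) by (apply Gc; auto).
    split; nra. }
  assert (Hinit : forall x, H x 0 <= M).
  { intro x. unfold H, M. replace ((K ^ 2 - 4 * 0) ^ 2) with (K ^ 4) by ring.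
    unfold Rdiv at 1 3. apply Rmult_le_compat_r; [left; apply Rinv_0_lt_compat; auto|].
    assert (Hc0 : 0 < c x 0) by (apply Gc; auto; lra). assert (Ha0 : 0 < a x 0) by (apply Ga; auto; lra).
    replace (c x 0 ^ 2 / a x 0 ^ 2) with ((c x 0 / a x 0) ^ 2) by (field; lra).
    assert (0 < c x 0 / a x 0) by (apply Rdiv_lt_0_compat; auto).
    specialize (H0 x). nra. }
  change ((c z1 t1 ^ 2 / a z1 t1 ^ 2 - 1) / (K ^ 2 - 4 * t1) ^ 2) with (H z1 t1).
  apply Rnot_lt_le. intro Hgt. fold M in Hgt.
  assert (Ht1p : 0 < t1).
  { destruct Ht1 as [|E]; auto. subst t1. specialize (Hinit z1). lra. }
  set (del := (H z1 t1 - M) / (2 * t1)).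
  assert (Hdel : 0 < del) by (unfold del; apply Rdiv_lt_0_compat; lra).
  assert (Hdt : del * t1 = (H z1 t1 - M) / 2) by (unfold del; field; lra).
  set (G := fun x s => H x s - del * s).
  destruct (first_time G t1 (G z1 t1) Ht1) as [zs [ts [Hts [HGs [Hsp Htm]]]]].
  - intros z t Ht. assert (HtT : Rbar_lt t T) by (apply (Rbar_lt_le_t t t1); auto; lra).
    destruct (HD z t ltac:(lra) HtT) as [_ HDp].
    assert (0 < a z t) by (apply Ga; auto; lra).
    apply (cont_ext (fun x s => (c x s * (c x s * 1) * / (a x s * (a x s * 1)) + - (1)) *
       / ((K ^ 2 - 4 * s) * ((K ^ 2 - 4 * s) * 1)) + - del * s)).
    { intros x s. unfold G, H. unfold Rdiv. simpl. ring. }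
    apply cont_plus; [|apply cont_mult; [apply cont_const|apply cont_t]].
    apply cont_mult.
    + apply cont_plus; [|apply cont_const]. apply cont_mult.
      * apply cont_mult; [apply Gc; auto; lra|]. apply cont_mult; [apply Gc; auto; lra|apply cont_const].
      * apply cont_inv. apply cont_mult; [apply Ga; auto; lra|]. apply cont_mult; [apply Ga; auto; lra|apply cont_const].
        simpl. apply Rgt_not_eq. nra.
    + apply cont_inv.
      * assert (Hc1 : cont (fun _ s => K ^ 2 - 4 * s) z t).
        { apply (cont_ext (fun _ s => K ^ 2 + - (4) * s)); [intros; ring|].
          apply cont_plus; [apply cont_const|apply cont_mult; [apply cont_const|apply cont_t]]. }
        apply cont_mult; auto. apply cont_mult; auto. apply cont_const.
      * simpl. apply Rgt_not_eq. nra.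
  - intros z t. unfold G, H. destruct Ga as [_ [_ [_ [_ [_ Pa]]]]]. destruct Gc as [_ [_ [_ [_ [_ Pc]]]]].
    rewrite Pa, Pc. auto.
  - intro z. unfold G at 1. specialize (Hinit z). unfold G. lra.
  - exists z1. lra.
  - assert (HT : Rbar_lt ts T) by (apply (Rbar_lt_le_t ts t1); auto; lra).
    destruct Hsol as [_ [_ HRF]].
    destruct (HRF zs ts ltac:(lra) HT) as [Ea [_ [Ec _]]].
    assert (Hcs : 0 < c zs ts) by (apply Gc; auto; lra).
    assert (Has : 0 < a zs ts) by (apply Ga; auto; lra).
    assert (Hbs : 0 < b zs ts) by (apply Gb; auto; lra).
    destruct (Hord zs ts ltac:(lra) HT) as [Hac Hbc].
    destruct (HD zs ts ltac:(lra) HT) as [HcD HDp].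
    set (D := K ^ 2 - 4 * ts) in *.
    assert (Hsp' : forall y, c y ts / a y ts <= c zs ts / a zs ts).
    { intro y. assert (Hcy : 0 < c y ts) by (apply Gc; auto; lra).
      assert (Hay : 0 < a y ts) by (apply Ga; auto; lra).
      specialize (Hsp y). rewrite <- HGs in Hsp. unfold G, H in Hsp. fold D in Hsp.
      assert (HD2 : 0 < D ^ 2) by (apply pow_lt; auto).
      assert (Hr : c y ts ^ 2 / a y ts ^ 2 <= c zs ts ^ 2 / a zs ts ^ 2).
      { assert ((c y ts ^ 2 / a y ts ^ 2 - 1) / D ^ 2 <= (c zs ts ^ 2 / a zs ts ^ 2 - 1) / D ^ 2) by lra.
        unfold Rdiv at 2 4 in H1. apply Rmult_le_reg_r in H1; [lra|]. apply Rinv_0_lt_compat; auto. }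
      apply sq_le; try (apply Rdiv_lt_0_compat; auto).
      replace ((c y ts / a y ts) ^ 2) with (c y ts ^ 2 / a y ts ^ 2) by (field; lra).
      replace ((c zs ts / a zs ts) ^ 2) with (c zs ts ^ 2 / a zs ts ^ 2) by (field; lra). auto. }
    destruct (spatial_ratio T c a zs ts Gc Ga ltac:(lra) HT Hsp') as [E1 E2].
    pose proof (pair_id T phi c a b zs ts _ _ _ _ Gphi Gc Ga Gb ltac:(lra) HT Ec ltac:(ring) Ea eq_refl E1) as Xeq.
    set (X := dt c zs ts * a zs ts - c zs ts * dt a zs ts) in Xeq.
    assert (Hph : 0 < phi zs ts) by (apply Gphi; auto; lra).
    assert (Hreact : - (2 * (c zs ts ^ 4 - (a zs ts ^ 2 - b zs ts ^ 2) ^ 2) / (c zs ts * a zs ts ^ 2 * b zs ts ^ 2)) * a zs ts +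
       c zs ts * (2 * (a zs ts ^ 4 - (b zs ts ^ 2 - c zs ts ^ 2) ^ 2) / (a zs ts * b zs ts ^ 2 * c zs ts ^ 2))
       = -4 * (c zs ts ^ 2 - a zs ts ^ 2) * a zs ts / (c zs ts * b zs ts ^ 2)
         - 4 * (c zs ts ^ 2 - a zs ts ^ 2) * (c zs ts ^ 2 - b zs ts ^ 2) / (c zs ts * b zs ts ^ 2 * a zs ts)).
    { field. repeat split; lra. }
    assert (Hneg1 : 0 <= 4 * (c zs ts ^ 2 - a zs ts ^ 2) * (c zs ts ^ 2 - b zs ts ^ 2) / (c zs ts * b zs ts ^ 2 * a zs ts)).
    { apply Rdiv_le_0_compat; [|apply Rmult_lt_0_compat; [apply Rmult_lt_0_compat|]; auto; apply pow_lt; auto].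
      assert (0 <= c zs ts ^ 2 - a zs ts ^ 2) by nra. assert (0 <= c zs ts ^ 2 - b zs ts ^ 2) by nra. nra. }
    assert (Hneg2 : (dz (dz c) zs ts * a zs ts - c zs ts * dz (dz a) zs ts) / phi zs ts ^ 2 <= 0).
    { unfold Rdiv. assert (0 < / phi zs ts ^ 2) by (apply Rinv_0_lt_compat, pow_lt; auto). nra. }
    assert (HX : X <= -4 * (c zs ts ^ 2 - a zs ts ^ 2) * a zs ts / (c zs ts * b zs ts ^ 2)).
    { rewrite Xeq, Hreact. lra. }
    pose proof (proj1 (proj2 (proj2 (proj2 (proj2 Gc)))) zs ts ltac:(lra) HT) as Hcd.
    pose proof (proj1 (proj2 (proj2 (proj2 (proj2 Ga)))) zs ts ltac:(lra) HT) as Had.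
    pose proof (is_derive_div (fun s => c zs s ^ 2) (fun s => a zs s ^ 2) ts _ _
       (is_derive_pow _ 2 ts _ Hcd) (is_derive_pow _ 2 ts _ Had)
       ltac:(apply pow_nonzero; lra)) as q.
    pose proof (isd_minus _ _ ts _ _ q (isd_const 1 ts)) as r.
    pose proof (isd_minus _ _ ts _ _ (isd_const (K ^ 2) ts) (isd_mult _ _ ts _ _ (isd_const 4 ts) (isd_id ts))) as dD.
    pose proof (is_derive_pow _ 2 ts _ dD) as dD2.
    pose proof (is_derive_div _ _ ts _ _ r dD2 ltac:(cbv beta; apply pow_nonzero; fold D; lra)) as g.
    pose proof (isd_minus _ _ ts _ _ g (isd_mult _ _ ts _ _ (isd_const del ts) (isd_id ts))) as full.
    cbv beta in full.
    pose proof (time_deriv_nonneg _ ts _ (proj1 Hts) full) as Htd.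
    specialize (Htd ltac:(intros s Hs; rewrite <- HGs in Htm; specialize (Htm zs s Hs); unfold G, H in Htm; exact Htm)).
    fold D in Htd.
    assert (Hval : forall Dv, 0 <= Dv -> Dv = 2 * c zs ts * X / (a zs ts ^ 3 * D ^ 2) + 8 * (c zs ts ^ 2 / a zs ts ^ 2 - 1) / D ^ 3 - del -> False).
    { intros Dv H1 H2. pose proof (final_ineq (c zs ts) (a zs ts) (b zs ts) D X _ del Has Hbs Hcs Hac Hbc HcD eq_refl HX Hdel). lra. }
    apply (Hval _ Htd). unfold X. simpl. field. repeat split; lra.
Qed.

Theorem lemma4p5 (T : Rbar) (phi a b c : R -> R -> R) (lambda : R) :
  RF_maximal T phi a b c ->
  (forall z, 0 < a z 0 <= b z 0 /\ b z 0 <= c z 0) ->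
  1 <= lambda ->
  (exists z, 1 <= c z 0 / a z 0) ->
  (forall z, c z 0 / a z 0 <= lambda) ->
  forall z t, 0 <= t -> Rbar_lt t T ->
    1 <= c z t ^ 2 / a z t ^ 2 /\
    c z t ^ 2 / a z t ^ 2 <=
      exp (lambda ^ 2 - 1) * (lambda ^ 2 - 1) * (1 - 4 * t / chat c 0 ^ 2) ^ 2 + 1.
Proof.
  intros [Hsol _] Hinit Hlam _ Hratio z t Ht HT.
  pose proof (good_of T phi a b c a Hsol ltac:(auto)) as Ga.
  pose proof (good_of T phi a b c c Hsol ltac:(auto)) as Gc.
  assert (HT0 : Rbar_lt 0 T) by (apply (Rbar_lt_le_t 0 t T); auto).
  assert (Hord := order_pres T phi a b c Hsol ltac:(intro x; specialize (Hinit x); lra)).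
  destruct (chat_max T c Gc HT0) as [Hch HK].
  set (K := chat c 0) in *.
  pose proof (c_bound T phi a b c K Hsol Hord Hch) as Hcb.
  pose proof (q_bound T phi a b c K lambda Hsol Hord Hcb HK Hratio z t Ht HT) as Hq.
  assert (Hcz : 0 < c z t) by (apply Gc; auto).
  assert (Haz : 0 < a z t) by (apply Ga; auto).
  destruct (Hord z t Ht HT) as [Hac _].
  assert (Ha2 : 0 < a z t ^ 2) by (apply pow_lt; auto).
  split.
  - apply (Rmult_le_reg_r (a z t ^ 2)); auto. unfold Rdiv. rewrite Rmult_assoc, Rinv_l by lra. nra.
  - specialize (Hcb z t Ht HT).
    assert (HD : 0 < K ^ 2 - 4 * t) by nra.
    assert (HD2 : 0 < (K ^ 2 - 4 * t) ^ 2) by (apply pow_lt; auto).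
    assert (HQ : c z t ^ 2 / a z t ^ 2 - 1 <= (lambda ^ 2 - 1) * (1 - 4 * t / K ^ 2) ^ 2).
    { replace ((lambda ^ 2 - 1) * (1 - 4 * t / K ^ 2) ^ 2) with ((lambda ^ 2 - 1) / K ^ 4 * (K ^ 2 - 4 * t) ^ 2)
        by (field; lra).
      apply (Rmult_le_compat_r ((K ^ 2 - 4 * t) ^ 2)) in Hq; [|lra].
      replace ((c z t ^ 2 / a z t ^ 2 - 1) / (K ^ 2 - 4 * t) ^ 2 * (K ^ 2 - 4 * t) ^ 2)
        with (c z t ^ 2 / a z t ^ 2 - 1) in Hq by (field; lra). exact Hq. }
    assert (Hs : 0 <= (lambda ^ 2 - 1) * (1 - 4 * t / K ^ 2) ^ 2).
    { apply Rmult_le_pos; [nra| apply pow2_ge_0]. }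
    pose proof (exp_ineq1_le (lambda ^ 2 - 1)).
    assert (1 <= exp (lambda ^ 2 - 1)) by nra.
    rewrite Rmult_assoc. nra.
Qed.
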